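(* Let $X\in\mathcal M_{\mathbf r}$, $U_1,\dots,U_d$ a minimal left-orthogonal TT decomposition of $X$, and $V\in\mathrm T_X\mathcal M_{\mathbf r}$ given by gauged cores $\delta V_1,\dots,\delta V_d$. Let $c_1,\dots,c_d$ be smooth core curves on $(-\epsilon,\epsilon)$ with $c_k(t)=U_k+t\,\delta V_k+O(t^2)$ ($k<d$), $c_d(t)=U_d+t\,\delta V_d$, such that for every $t$ the cores $c_1(t),\dots,c_d(t)$ form a minimal left-orthogonal TT decomposition of a tensor in $\mathcal M_{\mathbf r}$. Let $X_{\le k}(t),X_{\ge k}(t)$ denote the interface matrices built from $c_1(t),\dots,c_d(t)$. Then for all $k\in[d]$: (1) $\frac{d}{dt}X_{\le k}(t)\big|_{t=0}=V_{\le k}$; (2) $\frac{d}{dt}X_{\ge k}(t)\big|_{t=0}=V_{\ge k}$.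
   Context: Fix $d\ge2$, positive integers $n_1,\dots,n_d$, $\mathbf r=(r_1,\dots,r_{d-1})$, $r_0=r_d=1$; $\mathcal M_{\mathbf r}$ is the manifold of tensors of TT-rank $\mathbf r$ (TT-rank defined via ranks of the colexicographic flattenings $Z^{<\mu>}$). TT cores $U_k\in\mathbb R^{r_{k-1}\times n_k\times r_k}$ with slices $U_k(i)$ give $X(i_1,\dots,i_d)=U_1(i_1)\cdots U_d(i_d)$; minimal means the TT-rank equals $\mathbf r$; $U^L:=U^{<2>}\in\mathbb R^{r_{k-1}n_k\times r_k}$, $U^R:=U^{<1>}\in\mathbb R^{r_{k-1}\times n_kr_k}$; left-orthogonal means $(U_k^L)^\top U_k^L=I$ for $k<d$. Interface matrices: $X_{\le0}=1$, $X_{\le k}=(I_{n_k}\otimes X_{\le k-1})U_k^L$; $X_{\ge d+1}=1$, $X_{\ge k}^\top=U_k^R(X_{\ge k+1}^\top\otimes I_{n_k})$. Tangent vectors: $V=\sum_kU_1(i_1)\cdots U_{k-1}(i_{k-1})\delta V_k(i_k)U_{k+1}(i_{k+1})\cdots U_d(i_d)$ with $(\delta V_k^L)^\top U_k^L=0$ for $k<d$. Variational interface matrices: $V_{\le0}=0$, $V_{\le k}=(I_{n_k}\otimes V_{\le k-1})U_k^L+(I_{n_k}\otimes X_{\le k-1})\delta V_k^L$; $V_{\ge d+1}=0$, $V_{\ge k}^\top=U_k^R(V_{\ge k+1}^\top\otimes I_{n_k})+\delta V_k^R(X_{\ge k+1}^\top\otimes I_{n_k})$. *)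

(* Defs.v *)
From HB Require Import structures.
From mathcomp Require Import all_boot all_order all_algebra.
From mathcomp Require Import mxtens.
From mathcomp Require Import all_classical all_reals all_analysis.
Set Implicit Arguments. Unset Strict Implicit. Unset Printing Implicit Defensive.
Import Order.TTheory GRing.Theory Num.Theory.
Local Open Scope ring_scope.

(* Conventions:
   - modes k = 1..d; n k = n_k; r k = r_k with r 0 = r d = 1 (hypotheses).
   - a TT core U_k is given by its slices U_k(i) : 'M_(r_{k-1}, r_k), i < n_k.
   - the Kronecker product is mxtens.tensmx (A *t B), with the standard
     index (i1 * p + i2) for A : 'M_(m,_), B : 'M_(p,_).
   - multi-indices (i_1,...,i_k) are encoded colexicographically:
     i_1 + n_1 i_2 + n_1 n_2 i_3 + ... *)

Section TT.
Variable R : realType.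
Variables (d : nat) (n r : nat -> nat).

Definition core (k : nat) := 'I_(n k) -> 'M[R]_(r k.-1, r k).
Definition cores := forall k : nat, core k.

(* left unfolding U^L in R^{r_{k-1} n_k x r_k}: row index alpha + r_{k-1} i *)
Definition coreL k (C : core k) : 'M[R]_(n k * r k.-1, r k) :=
  \matrix_(p, b) C (mxtens_unindex p).1 (mxtens_unindex p).2 b.
(* right unfolding U^R in R^{r_{k-1} x n_k r_k}: column index i + n_k beta *)
Definition coreR k (C : core k) : 'M[R]_(r k.-1, r k * n k) :=
  \matrix_(a, q) C (mxtens_unindex q).2 a (mxtens_unindex q).1.

Fixpoint P (k : nat) : nat := if k is k'.+1 then (n k'.+1 * P k')%N else 1%N.
Fixpoint Q (j k : nat) : nat := if j is j'.+1 then (Q j' k.+1 * n k)%N else 1%N.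

Fixpoint Xle (U : cores) (k : nat) : 'M[R]_(P k, r k) :=
  if k is k'.+1 then (1%:M : 'M[R]_(n k'.+1)) *t Xle U k' *m coreL (U k'.+1)
  else const_mx 1.

(* transposed right interface matrices, built with j = number of cores:
   XgeT U j k = X_{>=k}^T when k + j = d + 1;
   X_{>=d+1}^T = 1, X_{>=k}^T = U_k^R (X_{>=k+1}^T (x) I_{n_k}) *)
Fixpoint XgeT (U : cores) (j k : nat) : 'M[R]_(r k.-1, Q j k) :=
  if j is j'.+1 then coreR (U k) *m (XgeT U j' k.+1 *t (1%:M : 'M[R]_(n k)))
  else const_mx 1.

Definition Xge (U : cores) (k : nat) : 'M[R]_(Q (d.+1 - k) k, r k.-1) :=
  (XgeT U (d.+1 - k) k)^T.

Fixpoint Vle (U dV : cores) (k : nat) : 'M[R]_(P k, r k) :=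
  if k is k'.+1 then
    (1%:M : 'M[R]_(n k'.+1)) *t Vle U dV k' *m coreL (U k'.+1)
  + (1%:M : 'M[R]_(n k'.+1)) *t Xle U k' *m coreL (dV k'.+1)
  else 0.

Fixpoint VgeT (U dV : cores) (j k : nat) : 'M[R]_(r k.-1, Q j k) :=
  if j is j'.+1 then
    coreR (U k) *m (VgeT U dV j' k.+1 *t (1%:M : 'M[R]_(n k)))
  + coreR (dV k) *m (XgeT U j' k.+1 *t (1%:M : 'M[R]_(n k)))
  else 0.

Definition Vge (U dV : cores) (k : nat) : 'M[R]_(Q (d.+1 - k) k, r k.-1) :=
  (VgeT U dV (d.+1 - k) k)^T.

(* Tensors in R^{n_1 x ... x n_d}, stored as their colexicographic
   vectorization (a column of length n_1 ... n_d). *)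
Definition tensor := 'cV[R]_(P d).

Definition flat (Z : tensor) (mu : nat) : 'M[R]_(P mu, Q (d - mu) mu.+1) :=
  \matrix_(p, q) \sum_(s < P d | (s : nat) == (p + P mu * q)%N) Z s 0.

Definition in_Mr (Z : tensor) : Prop :=
  forall mu, (1 <= mu < d)%N -> \rank (flat Z mu) = r mu.

(* the row U_1(i_1) ... U_k(i_k), for the colex-encoded index s of (i_1..i_k) *)
Fixpoint ttrow (U : cores) (k : nat) : 'I_(P k) -> 'M[R]_(1, r k) :=
  match k return 'I_(P k) -> 'M[R]_(1, r k) with
  | k'.+1 => fun s => @ttrow U k' (mxtens_unindex s).2 *m U k'.+1 (mxtens_unindex s).1
  | 0 => fun _ => const_mx 1
  end.

Definition is_TT (Z : tensor) (U : cores) : Prop :=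
  forall (s : 'I_(P d)) (b : 'I_(r d)), @ttrow U d s 0 b = Z s 0.

Definition minimal_TT (Z : tensor) (U : cores) : Prop := is_TT Z U /\ in_Mr Z.

Definition left_orth (U : cores) : Prop :=
  forall k, (1 <= k < d)%N -> (coreL (U k))^T *m coreL (U k) = 1%:M.

Definition gauged (U dV : cores) : Prop :=
  forall k, (1 <= k < d)%N -> (coreL (dV k))^T *m coreL (U k) = 0.

End TT.

Definition smooth_on (R : realType) (V : normedModType R) (e : R) (f : R -> V)
  : Prop :=
  forall (m : nat) (t : R), - e < t < e -> derivable (derive1n m f) t 1.

(* Main.v *)
Require Import Defs.
From HB Require Import structures.
From mathcomp Require Import all_boot all_order all_algebra.
From mathcomp Require Import mxtens.
From mathcomp Require Import all_classical all_reals all_analysis.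
Import Order.TTheory GRing.Theory Num.Theory.
Import numFieldNormedType.Exports.
Local Open Scope ring_scope.
Set Warnings "-notation-overridden,-ambiguous-paths,-notation-incompatible-prefix".

Section Helpers.
Local Open Scope classical_set_scope.
Lemma bigO_is_derive (R : realType) (W : normedModType R) (f : R -> W) (u v : W) :
  (fun t => f t - (u + t *: v)) =O_ (0 : R) (fun t : R => t ^+ 2) ->
  f 0 = u /\ is_derive (0 : R) (1 : R) f v.
Proof.
move=> /eqO_exP [k k0 Hk].
have f0 : f 0 = u.
  have := nbhs_singleton Hk; rewrite /= expr0n /= normr0 mulr0 scale0r addr0.
  by rewrite normr_le0 subr_eq0 => /eqP.
split => //.
have cv : (fun h : R => h^-1 *: ((f \o shift 0) (h *: 1) - f 0)) @ 0^' --> v.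
  apply/cvgrPdist_le => /= eps eps0.
  have Hk' : \forall h \near (0:R)^', `|f h - (u + h *: v)| <= k * `|h ^+ 2|.
    exact: cvg_within Hk.
  near=> h.
  have hn0 : h != 0 by near: h; exact: nbhs_dnbhs_neq.
  have hlt : `|h| < eps / k by near: h; apply: dnbhs0_lt; rewrite divr_gt0.
  have -> : v - h^-1 *: (f (h *: 1 + 0) - f 0) = - (h^-1 *: (f h - (u + h *: v))).
    rewrite addr0 f0 [h%:A]mulr1 !(scalerDr, scalerN, scalerBr) scalerA mulVf // scale1r.
    set a := h^-1 *: f h; set b := h^-1 *: u.
    by rewrite !opprB addrA (addrC v).
  rewrite normrN normrZ.
  have H1 : `|f h - (u + h *: v)| <= k * `|h ^+ 2| by near: h.
  rewrite normrV ?unitfE //.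
  apply: le_trans (ler_wpM2l _ H1) _; first by rewrite invr_ge0.
  rewrite normrX mulrCA expr2 mulKf ?normr_eq0 //.
  by rewrite -ler_pdivlMl // mulrC ltW.
by apply: DeriveDef; [apply/cvg_ex; exists v | apply: cvg_lim].
Unshelve. all: by end_near.
Qed.

Section Aux.
Variable R : realType.

Lemma is_derive_ext (W : normedModType R) (f g : R -> W) (t : R) D :
  (forall x, f x = g x) -> is_derive t (1:R) f D -> is_derive t (1:R) g D.
Proof. by move=> fg; have -> : f = g by apply: funext. Qed.

Lemma is_derive_mulR (f g : R -> R) (t : R) (df dg : R) :
  is_derive t (1:R) f df -> is_derive t (1:R) g dg ->
  is_derive t (1:R) (fun x => f x * g x) (df * g t + f t * dg).
Proof.
move=> Hf Hg; have := is_deriveM Hf Hg.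
by move=> H; apply: is_derive_eq H _; rewrite addrC mulrC.
Qed.

Lemma is_derive_mxP m n (M : R -> 'M[R]_(m, n)) (t : R) D :
  is_derive t (1:R) M D <-> forall i j, is_derive t (1:R) (fun x => M x i j) (D i j).
Proof.
split.
- move=> [dM dv] i j.
  have dij := (derivable_mxP M t 1).1 dM i j.
  apply: DeriveDef => //.
  by rewrite -dv derive_mx // mxE.
- move=> H.
  have dM : derivable M t 1.
    by apply/derivable_mxP => i j; case: (H i j).
  apply: DeriveDef => //.
  by rewrite derive_mx //; apply/matrixP => i j; rewrite mxE derive_val.
Qed.

Lemma is_derive_sumR n (h : 'I_n -> R -> R) (t : R) (dh : 'I_n -> R) :
  (forall i, is_derive t (1:R) (h i) (dh i)) ->
  is_derive t (1:R) (fun x => \sum_(i < n) h i x) (\sum_(i < n) dh i).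
Proof.
move=> H; apply: is_derive_ext (is_derive_sum H) => x.
by rewrite fct_sumE.
Qed.

Lemma is_derive_mulmx m n p (A : R -> 'M[R]_(m, n)) (B : R -> 'M[R]_(n, p)) (t : R) dA dB :
  is_derive t (1:R) A dA -> is_derive t (1:R) B dB ->
  is_derive t (1:R) (fun x => A x *m B x) (dA *m B t + A t *m dB).
Proof.
move=> /is_derive_mxP HA /is_derive_mxP HB; apply/is_derive_mxP => i j.
have := @is_derive_sumR n (fun l x => A x i l * B x l j) t _
  (fun l => @is_derive_mulR _ _ _ _ _ (HA i l) (HB l j)).
move=> H; apply: is_derive_eq.
  by apply: is_derive_ext H => x; rewrite mxE.
by rewrite !mxE -big_split.
Qed.
End Aux.

Section Aux2.
Variable R : realType.

Lemma is_derive_tens m n p q (A : R -> 'M[R]_(m, n)) (B : R -> 'M[R]_(p, q)) (t : R) dA dB :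
  is_derive t (1:R) A dA -> is_derive t (1:R) B dB ->
  is_derive t (1:R) (fun x => A x *t B x) (dA *t B t + A t *t dB).
Proof.
move=> /is_derive_mxP HA /is_derive_mxP HB; apply/is_derive_mxP => i j.
have H := @is_derive_mulR _ _ _ _ _ _ (HA (mxtens_unindex i).1 (mxtens_unindex j).1)
  (HB (mxtens_unindex i).2 (mxtens_unindex j).2).
apply: is_derive_eq.
  by apply: is_derive_ext H => x; rewrite mxE.
by rewrite !mxE.
Qed.

Lemma is_derive_tr m n (A : R -> 'M[R]_(m, n)) (t : R) dA :
  is_derive t (1:R) A dA -> is_derive t (1:R) (fun x => (A x)^T) dA^T.
Proof.
move=> /is_derive_mxP HA; apply/is_derive_mxP => i j.
by apply: is_derive_eq; [apply: is_derive_ext (HA j i) => x; rewrite mxE | rewrite mxE].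
Qed.

Lemma is_derive_coreL (n r : nat -> nat) k (C : R -> core R n r k) (t : R) (D : core R n r k) :
  (forall i, is_derive t (1:R) (fun x => C x i) (D i)) ->
  is_derive t (1:R) (fun x => coreL (C x)) (coreL D).
Proof.
move=> HC; apply/is_derive_mxP => i j.
have /is_derive_mxP H := HC (mxtens_unindex i).1.
have {}H := H (mxtens_unindex i).2 j.
by apply: is_derive_eq; [apply: is_derive_ext H => x; rewrite mxE | rewrite mxE].
Qed.

Lemma is_derive_coreR (n r : nat -> nat) k (C : R -> core R n r k) (t : R) (D : core R n r k) :
  (forall i, is_derive t (1:R) (fun x => C x i) (D i)) ->
  is_derive t (1:R) (fun x => coreR (C x)) (coreR D).
Proof.
move=> HC; apply/is_derive_mxP => i j.
have /is_derive_mxP H := HC (mxtens_unindex j).2.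
have {}H := H i (mxtens_unindex j).1.
by apply: is_derive_eq; [apply: is_derive_ext H => x; rewrite mxE | rewrite mxE].
Qed.
End Aux2.

Arguments is_derive_tens {R m n p q A B t dA dB}.
Arguments is_derive_mulmx {R m n p A B t dA dB}.
Arguments is_derive_tr {R m n A t dA}.

Section Aux3.
Variable R : realType.
Variables (d : nat) (n r : nat -> nat).
Variables (c : R -> cores R n r) (U dV : cores R n r).
Hypothesis Hc : forall k, (1 <= k <= d)%N -> forall i,
  is_derive (0:R) (1:R) (fun t => c t k i) (dV k i) /\ c 0 k i = U k i.

Lemma c0_core k : (1 <= k <= d)%N -> c 0 k = U k.
Proof. by move=> hk; apply: funext => i; case: (Hc _ hk i). Qed.

Lemma Xle_deriv k : (k <= d)%N ->
  is_derive (0:R) (1:R) (fun t => Xle (c t) k) (Vle U dV k) /\ Xle (c 0) k = Xle U k.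
Proof.
elim: k => [|k IH] hk.
  by split => //=; apply: is_derive_cst.
have [IHd IH0] := IH (ltnW hk).
have hk1 : (1 <= k.+1 <= d)%N by rewrite hk.
split; last by rewrite /= IH0 (c0_core _ hk1).
have HL : is_derive (0:R) (1:R) (fun t => coreL (c t k.+1)) (coreL (dV k.+1)).
  by apply: is_derive_coreL => i; case: (Hc _ hk1 i).
have HT := is_derive_tens (is_derive_cst (1%:M : 'M[R]_(n k.+1)) (0:R) (1:R)) IHd.
have H := is_derive_mulmx HT HL.
apply: is_derive_eq H _.
rewrite /= tens0mx add0r IH0 (c0_core _ hk1).
by [].
Qed.

Lemma XgeT_deriv j k : (1 <= k)%N -> (k + j <= d.+1)%N ->
  is_derive (0:R) (1:R) (fun t => XgeT (c t) j k) (VgeT U dV j k) /\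
  XgeT (c 0) j k = XgeT U j k.
Proof.
elim: j k => [|j IH] k hk hkj.
  by split => //=; apply: is_derive_cst.
have hkj' : (k.+1 + j <= d.+1)%N by rewrite addSnnS.
have [IHd IH0] := IH k.+1 isT hkj'.
have hk1 : (1 <= k <= d)%N by rewrite hk /=; move: hkj; rewrite addnS ltnS => /(leq_trans (leq_addr _ _)).
split; last by rewrite /= IH0 (c0_core _ hk1).
have HL : is_derive (0:R) (1:R) (fun t => coreR (c t k)) (coreR (dV k)).
  by apply: is_derive_coreR => i; case: (Hc _ hk1 i).
have HT := is_derive_tens IHd (is_derive_cst (1%:M : 'M[R]_(n k)) (0:R) (1:R)).
have H := is_derive_mulmx HL HT.
apply: is_derive_eq H _.
rewrite /= tensmx0 addr0 IH0 (c0_core _ hk1) addrC.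
by [].
Qed.
End Aux3.

End Helpers.

Theorem lemma16 (R : realType) (d : nat) (n r : nat -> nat)
  (hd : (2 <= d)%N)
  (hn : forall k, (1 <= k <= d)%N -> (0 < n k)%N)
  (hr0 : r 0%N = 1%N) (hrd : r d = 1%N)
  (X : tensor R d n) (U dV : cores R n r)
  (hU : minimal_TT X U) (hUo : left_orth d U) (hV : gauged d U dV)
  (e : R) (he : 0 < e) (c : R -> cores R n r)
  (hsm : forall k, (1 <= k <= d)%N -> forall i : 'I_(n k),
           smooth_on e (fun t => c t k i))
  (hc : forall k, (1 <= k < d)%N -> forall i : 'I_(n k),
           (fun t => c t k i - (U k i + t *: dV k i))
             =O_ (0 : R) (fun t : R => t ^+ 2))
  (hcd : forall t, - e < t < e -> forall i : 'I_(n d),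
           c t d i = U d i + t *: dV d i)
  (hct : forall t, - e < t < e ->
           exists Z : tensor R d n, minimal_TT Z (c t) /\ left_orth d (c t)) :
  forall k, (1 <= k <= d)%N ->
    is_derive (0 : R) (1 : R) (fun t => Xle (c t) k) (Vle U dV k) /\
    is_derive (0 : R) (1 : R) (fun t => Xge d (c t) k) (Vge d U dV k).
Proof.
have Hc : forall k, (1 <= k <= d)%N -> forall i,
    is_derive (0:R) (1:R) (fun t => c t k i) (dV k i) /\ c 0 k i = U k i.
  move=> k /andP[hk1 hkd] i.
  have HO : (fun t => c t k i - (U k i + t *: dV k i))
             =O_ (0 : R) (fun t : R => t ^+ 2).
    move: hkd; rewrite leq_eqVlt => /orP[/eqP ekd|hkd]; last first.
      by apply: hc; rewrite hk1 hkd.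
    subst k.
    apply/eqO_exP; exists 1 => //.
    near=> t.
    have ht : - e < t < e.
      rewrite -ltr_norml; near: t; exact: (@nbhs0_lt _ R^o e he).
    by rewrite hcd // subrr normr0 mul1r normr_ge0.
  by have [-> ?] := @bigO_is_derive _ _ _ _ _ HO; split.
move=> k hk; split.
  by have [] := @Xle_deriv R d n r c U dV Hc k (proj2 (andP hk)).
have hk1 : (1 <= k)%N by case/andP: hk.
have hkj : (k + (d.+1 - k) <= d.+1)%N.
  by case/andP: hk => _ hkd; rewrite subnKC //; exact: leqW.
have [H _] := @XgeT_deriv R d n r c U dV Hc _ _ hk1 hkj.
exact: is_derive_tr H.
Unshelve. all: by end_near.
Qed.
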